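(* Let $G$ be a finite $2$-connected graph, $T$ its Tutte's tree, and $\delta_G$ the spread of $G$. For every $n\ge2$, if the diameter of $T$ is greater than $4n\cdot\delta_G$, then $G$ contains at least $n$ parallel hinges.
   Context: Graphs are finite and undirected. A tree decomposition of $G$ is a pair $(T,(V_t))$ with $T$ a tree, $V_t\subseteq V_G$, $\bigcup_t V_t=V_G$, every edge inside some $V_t$, and $V_{t_1}\cap V_{t_3}\subseteq V_{t_2}$ whenever $t_2$ is on the $t_1$–$t_3$ path. The torso $\tau_t$ is $G[V_t]$ plus, for each $tt'\in E_T$, an edge joining the two vertices of $V_t\cap V_{t'}$. The Tutte decomposition of a $2$-connected graph is the unique tree decomposition with $|V_t\cap V_{t'}|=2$ for $tt'\in E_T$ whose torsos are $k$-bonds ($k\ge3$), $3$-connected graphs or cycles; $T$ is Tutte's tree. A $2$-separation is $(A,B)$ with $A\cup B=V_G$, $|A\cap B|=2$ and no edge between $A\setminus B$ and $B\setminus A$; $A\cap B$ is a hinge if $G[A]$ or $G[B]$ is $2$-connected. The spread of a vertex is the number of hinges containing it; $\delta_G$ is the maximum spread over all vertices. A sequence of hinges is parallel if the hinges are pairwise disjoint and there is a path $t_1\dots t_p$ in $T$ such that each hinge is contained in some $V_{t_j}$. *)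

(* Defs.v *)
(* Finite simple graphs are symmetric irreflexive relations
   on a finType. *)
From mathcomp Require Import all_boot.
Set Implicit Arguments.
Unset Strict Implicit.
Unset Printing Implicit Defensive.

Section Graphs.
Variable V : finType.

Definition induced (e : rel V) (S : {set V}) : rel V :=
  [rel x y | [&& x \in S, y \in S & e x y]].

Definition connected_in (e : rel V) (S : {set V}) : bool :=
  [forall x in S, forall y in S, connect (induced e S) x y].

Definition k_connected (e : rel V) (S : {set V}) (k : nat) : bool :=
  (k < #|S|) &&
  [forall X : {set V}, ((X \subset S) && (#|X| < k)) ==> connected_in e (S :\: X)].

Definition two_connected (e : rel V) : bool := k_connected e setT 2.

Definition two_separation (e : rel V) (A B : {set V}) : bool :=
  [&& A :|: B == setT, #|A :&: B| == 2, A :\: B != set0, B :\: A != set0 &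
      [forall x in A :\: B, forall y in B :\: A, ~~ e x y]].

Definition hinge (e : rel V) (X : {set V}) : bool :=
  [exists A : {set V}, exists B : {set V},
     [&& two_separation e A B, A :&: B == X &
         k_connected e A 2 || k_connected e B 2]].

Definition spread (e : rel V) (v : V) : nat :=
  #|[set X : {set V} | hinge e X & v \in X]|.

Definition graph_spread (e : rel V) : nat := \max_(v : V) spread e v.

End Graphs.

Section Trees.
Variable I : finType.

Definition acyclic (f : rel I) : Prop :=
  forall c : seq I, uniq c -> 3 <= size c -> ~~ cycle f c.

Definition is_tree (f : rel I) : Prop :=
  (exists t : I, True) /\ (forall x y : I, connect f x y) /\ acyclic f.

Definition on_tpath (f : rel I) (t1 t2 t3 : I) : Prop :=
  exists p : seq I,
    [/\ path f t1 p, last t1 p = t3, uniq (t1 :: p) & t2 \in t1 :: p].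

Definition diameter_gt (f : rel I) (k : nat) : Prop :=
  exists x y : I, forall p : seq I, path f x p -> last x p = y -> k < size p.

End Trees.

Section Decompositions.
Variables (V I : finType) (e : rel V) (f : rel I) (B : I -> {set V}).

Definition tree_decomposition : Prop :=
  [/\ is_tree f,
      (forall v : V, exists t, v \in B t),
      (forall x y : V, e x y -> exists t, (x \in B t) && (y \in B t)) &
      (forall t1 t2 t3 : I, on_tpath f t1 t2 t3 -> B t1 :&: B t3 \subset B t2)].

(** number of tree-neighbours t' of t with V_t \cap V_t' = {x,y}
    (= number of virtual torso edges joining x and y) *)
Definition virtual_mult (t : I) (x y : V) : nat :=
  #|[set t' | f t t' & B t :&: B t' == [set x; y]]|.

Definition torso (t : I) : rel V :=
  [rel x y | [&& x \in B t, y \in B t, x != y &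
                 e x y || (0 < virtual_mult t x y)]].

(** the torso at t is a k-bond with k >= 3 (counting parallel edges:
    the real edge xy if present, plus one virtual edge per neighbour) *)
Definition bond_torso (t : I) : Prop :=
  exists x y : V, [/\ x != y, B t = [set x; y] & 3 <= e x y + virtual_mult t x y].

Definition cycle_torso (t : I) : Prop :=
  [/\ 3 <= #|B t|, connected_in (torso t) (B t) &
      forall x, x \in B t -> #|[set y | torso t x y]| = 2].

Definition three_connected_torso (t : I) : Prop :=
  k_connected (torso t) (B t) 3.

(** The Tutte decomposition: adhesion 2, torsos bonds / 3-connected / cycles,
    together with the standard normalisation making it unique. *)
Definition tutte_decomposition : Prop :=
  [/\ tree_decomposition,
      (forall t t', f t t' -> #|B t :&: B t'| = 2) &
      (forall t, [\/ bond_torso t, three_connected_torso t | cycle_torso t])] /\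
  [/\ (forall t t', f t t' -> ~ (bond_torso t /\ bond_torso t')),
      (forall t t', f t t' -> ~ (cycle_torso t /\ cycle_torso t')),
      (forall t t' x y, f t t' -> ~ bond_torso t -> ~ bond_torso t' ->
          B t :&: B t' = [set x; y] -> ~~ e x y) &
      (forall t t1 t2, ~ bond_torso t -> f t t1 -> f t t2 -> t1 != t2 ->
          B t :&: B t1 != B t :&: B t2)].

Definition has_parallel_hinges (n : nat) : Prop :=
  exists s : seq {set V},
    [/\ n <= size s, all (hinge e) s,
        pairwise (fun X Y : {set V} => [disjoint X & Y]) s &
        exists (t1 : I) (p : seq I),
          [/\ path f t1 p, uniq (t1 :: p) &
              forall X, X \in s -> exists2 t, t \in t1 :: p & X \subset B t]].

End Decompositions.

(* Main.v *)
Require Import Defs.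
From mathcomp Require Import all_boot zify.
From Stdlib Require Import Classical_Prop.
Set Implicit Arguments.
Unset Strict Implicit.
Unset Printing Implicit Defensive.

Section GraphLemmas.
Variable T : finType.
Implicit Types (e : rel T) (S W : {set T}).

Lemma induced_sym e S : symmetric e -> symmetric (induced e S).
Proof. by move=> hs a b; rewrite /induced /= hs andbCA. Qed.

Lemma induced_mono e S S' a b : S \subset S' ->
  connect (induced e S) a b -> connect (induced e S') a b.
Proof.
move=> /subsetP sS; apply: connect_sub => x y /and3P [hx hy hxy].
by apply: connect1; rewrite /induced /= (sS _ hx) (sS _ hy).
Qed.

Lemma path_induced e W x p : path e x p -> all (mem W) (x :: p) ->
  path (induced e W) x p.
Proof.
elim: p x => [//|y p IH] x /= /andP [exy hp] /and3P [hx hy hall].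
by rewrite /induced /= hx hy exy /=; apply: IH => //=; rewrite hy.
Qed.

Lemma connect_induced_last e S a b : connect (induced e S) a b -> a != b -> b \in S.
Proof.
move=> /connectP [p hp ->]; elim: p a hp => [|y p IH] a /=.
  by move=> _; rewrite eqxx.
move=> /andP [/and3P [_ hy _] hp] _.
have [<-|ne] := eqVneq y (last y p); first by [].
exact: IH.
Qed.

Lemma comp_restrict e W u v : connect (induced e W) u v ->
  connect (induced e [set w | connect (induced e W) u w]) u v.
Proof.
move=> /connectP [p hp ->].
set C := [set w | _].
suff H : forall x, path (induced e W) x p -> connect (induced e W) u x ->
  connect (induced e C) x (last x p) by exact: H.
clear hp; elim: p => [|y p IH] x //= /andP [hxy hp] hux.
have huy : connect (induced e W) u y by apply: connect_trans hux (connect1 hxy).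
apply: connect_trans (IH y hp huy).
apply: connect1; move: hxy; rewrite /induced /= !inE => /and3P [_ _ ->].
by rewrite hux huy.
Qed.

Lemma escape e S W u v : u \in S -> connect (induced e W) u v -> v \notin S ->
  exists a b, [/\ a \in S, b \in W, b \notin S, e a b & connect (induced e S) u a].
Proof.
move=> huS /connectP [p hp ->]; elim: p u huS hp => [|y p IH] u huS /=.
  by move=> _; rewrite huS.
move=> /andP [/and3P [hu hy euy] hp] hl.
have [yS|yS] := boolP (y \in S).
  have [a [b [h1 h2 h3 h4 h5]]] := IH y yS hp hl.
  exists a, b; split => //; apply: connect_trans h5.
  by apply: connect1; rewrite /induced /= huS yS euy.
by exists u, y; split.
Qed.

Lemma two_elems (x y a b : T) : a \in [set x; y] -> b \in [set x; y] -> a != b ->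
  (a = x /\ b = y) \/ (a = y /\ b = x).
Proof.
rewrite !inE => /orP [] /eqP -> /orP [] /eqP ->; rewrite ?eqxx //; by [left|right].
Qed.

End GraphLemmas.

Section Q.
Variable T : finType.
Variable e : rel T.
Hypothesis es : symmetric e.
Implicit Types (S A Bs Y : {set T}) (x y u v a b : T).

Lemma connect_induced_sym S a b : connect (induced e S) a b = connect (induced e S) b a.
Proof. by apply: sym_connect_sym; apply: induced_sym. Qed.

Lemma connect_induced_in S u a : u \in S -> connect (induced e S) u a -> a \in S.
Proof.
move=> hu h; have [<-|ne] := eqVneq u a; first by [].
exact: connect_induced_last h ne.
Qed.

Lemma connected_inP S u v : connected_in e S -> u \in S -> v \in S ->
  connect (induced e S) u v.
Proof.
by move=> /forallP /(_ u) /implyP H hu hv; move: (H hu) => /forallP /(_ v) /implyP; apply.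
Qed.

Lemma sepQ A Bs x y Y :
  A :|: Bs = setT -> A :&: Bs = [set x; y] ->
  (forall a b, a \in A -> a \notin Bs -> b \in Bs -> b \notin A -> ~~ e a b) ->
  Y \subset A -> connected_in e (setT :\: Y) ->
  (x \notin Y -> y \notin Y -> connect (induced e (A :\: Y)) x y) ->
  connected_in e (A :\: Y).
Proof.
move=> hU hI hcross hYA hG hxy.
apply/forallP => u; apply/implyP => hu; apply/forallP => v; apply/implyP => hv.
apply/negPn/negP => nuv.
set S := [set a | connect (induced e (A :\: Y)) u a].
have SA : forall a, a \in S -> a \in A :\: Y.
  by move=> a; rewrite inE; apply: connect_induced_in.
have SA_A : forall a, a \in S -> a \in A by move=> a /SA; rewrite inE => /andP [].
have huS : u \in S by rewrite inE connect0.
have hvS : v \notin S by rewrite inE.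
have inAB : forall b, b \notin A -> b \in Bs.
  move=> b hb; have : b \in A :|: Bs by rewrite hU inE.
  by rewrite inE (negbTE hb).
have huv : connect (induced e (setT :\: Y)) u v.
  apply: connected_inP hG _ _.
    by move: hu; rewrite !inE => /andP [->].
  by move: hv; rewrite !inE => /andP [->].
have hSW : S \subset setT :\: Y.
  by apply/subsetP => a /SA; rewrite !inE => /andP [->].
have stepA : forall a b, a \in S -> b \in A -> b \notin Y -> e a b -> b \in S.
  move=> a b ha hbA hbY hab; rewrite inE.
  move: (ha); rewrite inE => hua; apply: connect_trans hua (connect1 _).
  by rewrite /induced /= SA // hab !inE hbA hbY.
have [x0 [hx0S hx0X]] : exists x0, x0 \in S /\ x0 \in [set x; y].
  have [a [b [haS hbW hbS hab _]]] := escape huS huv hvS.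
  have hbY : b \notin Y by move: hbW; rewrite !inE => /andP [].
  have [hbA|hbA] := boolP (b \in A); first by rewrite (stepA a b) in hbS.
  exists a; split => //; rewrite -hI inE.
  have := SA a haS; rewrite inE => /andP [_ ->] /=.
  apply/negPn/negP => haB.
  by move: (hcross a b (SA_A a haS) haB (inAB b hbA) hbA); rewrite hab.
set S2 := S :|: (Bs :\: A).
have huS2 : u \in S2 by rewrite inE huS.
have hvS2 : v \notin S2.
  have hvA : v \in A by move: hv; rewrite inE => /andP [].
  by rewrite [v \in S2]inE (negbTE hvS) /= inE hvA.
have huv2 : connect (induced e (setT :\: Y)) u v by [].
have [a [b [haS hbW hbS hab _]]] := escape huS2 huv2 hvS2.
have hbY : b \notin Y by move: hbW; rewrite !inE => /andP [].
move: hbS; rewrite [b \in S2]inE negb_or => /andP [hbS].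
rewrite inE negb_and negbK => hbBA.
move: haS; rewrite [a \in S2]inE => /orP [haS|].
2: rewrite inE => /andP [haA haB].
  have [hbA|hbA] := boolP (b \in A); first by rewrite (stepA a b) in hbS.
  by move: hbBA; rewrite (negbTE hbA) (inAB b hbA).
have hbA : b \in A by apply/negPn/negP => hbA; move: hbBA; rewrite (negbTE hbA) (inAB b hbA).
have hbB : b \in Bs.
  apply/negPn/negP => hbB.
  by move: (hcross b a hbA hbB haB haA); rewrite es hab.
have hbX : b \in [set x; y] by rewrite -hI inE hbA.
have nx0b : x0 != b by apply: contraNneq hbS => <-.
have hx0Y : x0 \notin Y by have := SA x0 hx0S; rewrite inE => /andP [].
have hcon : connect (induced e (A :\: Y)) x0 b.
  case: (two_elems hx0X hbX nx0b) => [[ex eb]|[ex eb]]; move: hx0Y hbY;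
    rewrite ex eb => h1 h2; first exact: hxy.
  by rewrite connect_induced_sym; apply: hxy.
have : b \in S.
  by move: (hx0S); rewrite !inE => h; apply: connect_trans h hcon.
by rewrite (negbTE hbS).
Qed.
End Q.

Section Tree.
Variable I : finType.
Variable f : rel I.
Hypothesis f_sym : symmetric f.
Hypothesis f_irr : irreflexive f.
Hypothesis f_tree : is_tree f.
Implicit Types (u s t r : I).

Definition side u s : {set I} := [set r | connect (induced f (~: [set u])) s r].
Definition fe u s : rel I :=
  [rel a b | f a b && ~~ (((a == u) && (b == s)) || ((a == s) && (b == u)))].

Lemma f_conn x y : connect f x y.
Proof. by case: f_tree => _ [h _]. Qed.

Lemma noalt u s : f u s -> connect (fe u s) s u -> False.
Proof.
move=> fus /connectP [p hp el]; move: el.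
case: (shortenP hp) => p' hp' hu _ hl; symmetry in hl.
case: f_tree => _ [_ hac].
have nsu : s != u by apply: contraTneq fus => ->; rewrite f_irr.
have hsz : 2 <= size p'.
  case: p' hp' hu hl => [|y [|z q]] //=.
    by move=> _ _ hl; rewrite hl eqxx in nsu.
  move=> /andP [hsy _] _ hl; move: hsy; rewrite -hl /fe /= !eqxx /=.
  by rewrite orbT andbF.
move: (hac (s :: p') hu) => /= /(_ hsz); apply/negP/negPn.
rewrite /cycle rcons_path hl fus andbT.
by apply: sub_path hp' => a b /andP [].
Qed.

Lemma side_s u s : s \in side u s.
Proof. by rewrite inE connect0. Qed.

Lemma side_notu u s : f u s -> u \notin side u s.
Proof.
move=> fus; rewrite inE; apply/negP => h.
have nsu : s != u by apply: contraTneq fus => ->; rewrite f_irr.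
by move: (connect_induced_last h nsu); rewrite !inE eqxx.
Qed.

Lemma side_closed u s r r' : f u s -> r \in side u s -> f r r' -> r' != u ->
  r' \in side u s.
Proof.
move=> fus hr frr' nr'u; move: (hr); rewrite !inE => h.
apply: connect_trans h (connect1 _).
have nru : r != u by apply: contraTneq hr => ->; apply: side_notu.
by rewrite /induced /= !inE nru nr'u frr'.
Qed.

Lemma side_cover u r : r != u -> exists s, f u s /\ r \in side u s.
Proof.
move=> nru; case/connectP: (f_conn u r) => p hp el; move: el.
case: (shortenP hp) => p' hp' hu _ hl; symmetry in hl.
case: p' hp' hu hl => [|s q] /=; first by move=> _ _ hl; rewrite hl eqxx in nru.
move=> /andP [fus hq] /andP [hu _] hl; exists s; split => //.
rewrite inE; apply/connectP; exists q => //.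
apply: path_induced => //; apply/allP => a ha; rewrite !inE.
by apply: contraNneq hu => <-.
Qed.

Lemma induced_fe u s a b : induced f (~: [set u]) a b -> fe u s a b.
Proof.
rewrite /induced /fe /= !inE => /and3P [ha hb ->] /=.
by rewrite (negbTE ha) (negbTE hb) /= andbF.
Qed.

Lemma side_disj u s1 s2 r : f u s1 -> f u s2 -> r \in side u s1 ->
  r \in side u s2 -> s1 = s2.
Proof.
move=> f1 f2; rewrite !inE => h1 h2; apply/eqP/negPn/negP => n12.
apply: (noalt f1).
have h12 : connect (induced f (~: [set u])) s1 s2.
  by apply: connect_trans h1 _; rewrite connect_induced_sym.
have c1 : connect (fe u s1) s1 s2.
  by apply: connect_sub h12 => a b h; apply: connect1; apply: induced_fe.
apply: connect_trans c1 (connect1 _).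
rewrite /fe /= f_sym f2 /= eqxx !andbT.
have ns2u : s2 != u by apply: contraTneq f2 => ->; rewrite f_irr.
by rewrite (negbTE ns2u) [s2 == s1]eq_sym (negbTE n12).
Qed.

Lemma induced_fe' u s a b : induced f (~: [set s]) a b -> fe u s a b.
Proof.
rewrite /induced /fe /= !inE => /and3P [ha hb ->] /=.
by rewrite (negbTE ha) (negbTE hb) /= !andbF.
Qed.

Lemma side_edge_disj t t' r : f t t' -> r \in side t t' -> r \in side t' t -> False.
Proof.
move=> ftt'; rewrite !inE => h1 h2.
apply: (noalt ftt').
have c1 : connect (fe t t') t' r.
  by apply: connect_sub h1 => a b h; apply: connect1; apply: induced_fe.
have c2 : connect (fe t t') r t.
  rewrite connect_induced_sym in h2; last by [].
  by apply: connect_sub h2 => a b h; apply: connect1; apply: induced_fe'.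
exact: connect_trans c1 c2.
Qed.

Lemma side_sub t t' s : f t t' -> f t' s -> s != t -> side t' s \subset side t t'.
Proof.
move=> ftt' ft's nst; apply/subsetP => r hr.
have ntside : t \notin side t' s.
  apply/negP => h; move/eqP: nst; apply.
  by apply: (side_disj ft's (_ : f t' t) h (side_s t' t)); rewrite f_sym.
have nt't : t' != t by apply: contraTneq ftt' => ->; rewrite f_irr.
move: hr; rewrite !inE => /comp_restrict h.
apply: connect_trans (connect1 (_ : induced f (~: [set t]) t' s)) _.
  rewrite /induced /= !inE nt't nst /=. exact: ft's.
apply: induced_mono h; apply/subsetP => w; rewrite !inE => hw.
by apply: contraNneq ntside => <-; rewrite inE.
Qed.

Lemma side_stay u s x p : f u s -> x \in side u s -> path f x p -> u \notin p ->
  last x p \in side u s.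
Proof.
move=> fus; elim: p x => [//|y p IH] x hx /= /andP [fxy hp].
rewrite inE negb_or => /andP [nuy hup].
apply: IH hp hup; apply: side_closed fus hx fxy _.
by rewrite eq_sym.
Qed.

Lemma sep_path u s r1 r2 : f u s -> r1 \in side u s -> r2 \notin side u s ->
  on_tpath f r1 u r2 /\ on_tpath f r1 s r2.
Proof.
move=> fus hr1 hr2.
have c1 : connect (induced f (~: [set u])) r1 s.
  by rewrite connect_induced_sym //; rewrite inE in hr1.
case/connectP: c1 => p1 hp1 el1; move: el1.
case: (shortenP hp1) => q1 hq1 uq1 _ hl1; symmetry in hl1.
case/connectP: (f_conn u r2) => p2 hp2 el2; move: el2.
case: (shortenP hp2) => q2 hq2 uq2 _ hl2; symmetry in hl2.
have in1 : forall w, w \in r1 :: q1 -> w \in side u s.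
  move=> w hw; have h := path_connect hq1 hw; move: hr1; rewrite /side !inE => hr1.
  exact: connect_trans hr1 h.
have in2 : forall w, w \in u :: q2 -> w \notin side u s.
  move=> w; rewrite inE => /orP [/eqP ->|hw]; first exact: side_notu.
  apply/negP => hws; move: hr2; rewrite -hl2.
  case/splitPr: hw hq2 uq2 => qa qb.
  rewrite cat_path /= => /and3P [_ _ hqb].
  move=> /andP [hu' _].
  rewrite last_cat /= => /negP; apply.
  apply: side_stay fus hws hqb _.
  by apply: contra hu' => h; rewrite mem_cat inE h !orbT.
have hpath : path f r1 (q1 ++ u :: q2).
  rewrite cat_path hl1 /= f_sym fus hq2 !andbT.
  by apply: sub_path hq1 => a b /and3P [].
have huniq : uniq (r1 :: q1 ++ u :: q2).
  rewrite -cat_cons cat_uniq uq1 uq2 andbT.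
  apply/hasPn => w /in2 hw; apply/negP => /in1.
  by rewrite (negbTE hw).
have hlast : last r1 (q1 ++ u :: q2) = r2 by rewrite last_cat hl1.
split; exists (q1 ++ u :: q2); split => //.
  by rewrite inE mem_cat inE eqxx !orbT.
by rewrite -cat_cons mem_cat -hl1 mem_last.
Qed.

End Tree.

Section Comb.
Variable T : finType.

Fixpoint good (s : seq {set T}) : bool :=
  if s is a :: s1 then (a \notin behead s1) && good s1 else true.

Lemma good_undup s : good s -> size s <= (size (undup s)).*2.
Proof.
move: {2}(size s) (leqnn (size s)) => m; elim: m s => [|m IH] [|a s1] //=.
move=> hsz /andP [na gs1].
have [ain|anot] := boolP (a \in s1); last first.
  rewrite /=; have := IH s1 hsz gs1; rewrite doubleS. rewrite -!muln2; lia.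
case: s1 hsz na gs1 ain => [//|b s2] /= hsz na /andP [nb gs2].
rewrite inE (negbTE na) orbF => /eqP eab; subst b.
rewrite (negbTE na) /=.
have := IH s2 (ltnW hsz) gs2; rewrite doubleS -!muln2; lia.
Qed.

Lemma card_le_union (U : finType) (A B : {set U}) : #|A :|: B| <= #|A| + #|B|.
Proof. by rewrite -cardsUI leq_addr. Qed.

Lemma greedy (d : nat) (F : {set {set T}}) :
  (forall v, #|[set Y in F | v \in Y]| <= d) ->
  (forall X, X \in F -> #|X| = 2) ->
  exists s : seq {set T}, [/\ {subset s <= F},
     pairwise (fun X Y : {set T} => [disjoint X & Y]) s & #|F| <= (d.*2) * size s].
Proof.
move=> hd h2; move: {2}#|F| (leqnn #|F|) => m; elim: m F hd h2 => [|m IH] F hd h2 hF.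
  by exists [::]; split => //; move: hF; rewrite leqn0 => /eqP ->.
have [F0|/set0Pn [X hX]] := eqVneq F set0.
  by exists [::]; split => //; rewrite F0 cards0.
set F' := [set Y in F | [disjoint Y & X]].
have /cards2P [x [y [nxy eX]]] : #|X| == 2 by rewrite h2.
have nXF' : X \notin F'.
  rewrite inE hX /= -setI_eq0 setIid eX; apply/set0Pn; exists x; rewrite !inE eqxx.
  done.
have hF'F : F' \subset F by apply/subsetP => Y; rewrite inE => /andP [].
have hlt : #|F'| < #|F|.
  by apply: proper_card; rewrite properE hF'F; apply/subsetPn; exists X.
have hd' : forall v, #|[set Y in F' | v \in Y]| <= d.
  move=> v; apply: leq_trans (hd v); apply: subset_leq_card.
  by apply/subsetP => Y; rewrite !inE => /andP [/andP [-> _] ->].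
have h2' : forall Y, Y \in F' -> #|Y| = 2 by move=> Y hY; apply: h2; apply: (subsetP hF'F).
have hm' : #|F'| <= m by rewrite -ltnS; apply: leq_trans hlt hF.
have [s' [hs'F hs'p hs'c]] := IH F' hd' h2' hm'.
exists (X :: s'); split.
- move=> Y; rewrite inE => /orP [/eqP ->//|/hs'F]; exact: (subsetP hF'F).
- rewrite pairwise_cons hs'p andbT; apply/allP => Y /hs'F.
  by rewrite inE disjoint_sym => /andP [].
have hcov : F \subset F' :|: ([set Y in F | x \in Y] :|: [set Y in F | y \in Y]).
  apply/subsetP => Y hY; rewrite !inE hY /=.
  case: (boolP [disjoint Y & X]) => //= nd.
  move: nd; rewrite -setI_eq0 => /set0Pn [v]; rewrite inE eX !inE => /andP [hvY].
  by case/orP => /eqP <-; rewrite hvY ?orbT.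
rewrite /=.
apply: (leq_trans (subset_leq_card hcov)).
apply: (leq_trans (card_le_union _ _)).
rewrite mulnS addnC; apply: leq_add => //.

apply: (leq_trans (card_le_union _ _)).
by rewrite -addnn; apply: leq_add; apply: hd.
Qed.
End Comb.

Section Decomp.
Variables (V I : finType) (e : rel V) (f : rel I) (B : I -> {set V}).
Hypothesis e_sym : symmetric e.
Hypothesis e_irr : irreflexive e.
Hypothesis G2conn : two_connected e.
Hypothesis f_sym : symmetric f.
Hypothesis f_irr : irreflexive f.
Hypothesis HT : tutte_decomposition e f B.
Implicit Types (u s t r : I).

Lemma HTtree : is_tree f. Proof. by case: HT => [[[]]]. Qed.
Lemma HTcover v : exists t, v \in B t. Proof. by case: HT => [[[]]]. Qed.
Lemma HTedge x y : e x y -> exists t, (x \in B t) && (y \in B t).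
Proof. by case: HT => [[[]]] _ _ H _ _ _ _; apply: H. Qed.
Lemma HTpath t1 t2 t3 : on_tpath f t1 t2 t3 -> B t1 :&: B t3 \subset B t2.
Proof. by case: HT => [[[]]] _ _ _ H _ _ _; apply: H. Qed.
Lemma HTadh t t' : f t t' -> #|B t :&: B t'| = 2.
Proof. by case: HT => [[_ H _] _]; apply: H. Qed.
Lemma HTtri t : [\/ bond_torso e f B t, three_connected_torso e f B t | cycle_torso e f B t].
Proof. by case: HT => [[_ _ H] _]; apply: H. Qed.
Lemma HTbb t t' : f t t' -> ~ (bond_torso e f B t /\ bond_torso e f B t').
Proof. by case: HT => [_ [H _ _ _]]; apply: H. Qed.
Lemma HTcc t t' : f t t' -> ~ (cycle_torso e f B t /\ cycle_torso e f B t').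
Proof. by case: HT => [_ [_ H _ _]]; apply: H. Qed.
Lemma HTdistinct t t1 t2 : ~ bond_torso e f B t -> f t t1 -> f t t2 -> t1 != t2 ->
  B t :&: B t1 != B t :&: B t2.
Proof. by case: HT => [_ [_ _ _ H]]; apply: H. Qed.

Definition Aside u s := \bigcup_(r in side f u s) B r.
Definition Bside u s := \bigcup_(r | r \notin side f u s) B r.

Lemma bag_sep u s v : f u s -> v \in Aside u s -> v \in Bside u s ->
  v \in B u /\ v \in B s.
Proof.
move=> fus /bigcupP [r1 hr1 hv1] /bigcupP [r2 hr2 hv2].
have [h1 h2] := sep_path f_sym f_irr HTtree fus hr1 hr2.
have hv : v \in B r1 :&: B r2 by rewrite inE hv1.
by split; [apply: (subsetP (HTpath h1)) | apply: (subsetP (HTpath h2))].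
Qed.

Lemma AB_union u s : Aside u s :|: Bside u s = setT.
Proof.
apply/setP => v; rewrite !inE; have [t ht] := HTcover v.
have [hts|hts] := boolP (t \in side f u s).
  by apply/orP; left; apply/bigcupP; exists t.
by apply/orP; right; apply/bigcupP; exists t.
Qed.

Lemma B_Aside u s t : t \in side f u s -> B t \subset Aside u s.
Proof. by move=> h; apply/subsetP => v hv; apply/bigcupP; exists t. Qed.
Lemma B_Bside u s t : t \notin side f u s -> B t \subset Bside u s.
Proof. by move=> h; apply/subsetP => v hv; apply/bigcupP; exists t. Qed.

Lemma AB_inter u s : f u s -> Aside u s :&: Bside u s = B u :&: B s.
Proof.
move=> fus; apply/setP => v; apply/idP/idP.
  by rewrite !inE => /andP [h1 h2]; have [-> ->] := bag_sep fus h1 h2.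
rewrite !inE => /andP [hu hs].
rewrite (subsetP (B_Aside (side_s f u s)) _ hs).
by rewrite (subsetP (B_Bside (side_notu f_irr fus)) _ hu).
Qed.

Lemma AB_cross u s a b : a \in Aside u s -> a \notin Bside u s ->
  b \in Bside u s -> b \notin Aside u s -> ~~ e a b.
Proof.
move=> ha na hb nb; apply/negP => eab.
have [t /andP [hat hbt]] := HTedge eab.
have [hts|hts] := boolP (t \in side f u s).
  by move: nb; rewrite (subsetP (B_Aside hts) _ hbt).
by move: na; rewrite (subsetP (B_Bside hts) _ hat).
Qed.

Lemma bond_card t : bond_torso e f B t -> #|B t| = 2.
Proof. by case=> x [y [nxy -> _]]; rewrite cards2 nxy. Qed.

Lemma nonbond_card t : ~ bond_torso e f B t -> 3 <= #|B t|.
Proof.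
move=> nb; case: (HTtri t) => [//|/andP [h _]|[h _ _]] //.
exact: ltnW.
Qed.

Lemma exists_out (T : finType) (P S : {set T}) : #|P| = 2 -> 3 <= #|S| ->
  exists2 w, w \in S & w \notin P.
Proof.
move=> hP hS; case: (boolP (S \subset P)) => [sub|/subsetPn [w hw nw]].
  by move: (subset_leq_card sub); rewrite hP leqNgt hS.
by exists w.
Qed.

Lemma NE u s : f u s -> exists w, w \in Aside u s /\ w \notin B u :&: B s.
Proof.
move=> fus.
have nbcase : ~ bond_torso e f B s -> exists w, w \in Aside u s /\ w \notin B u :&: B s.
  move=> nbs; have [w hw nw] := exists_out (HTadh fus) (nonbond_card nbs).
  by exists w; split => //; apply: (subsetP (B_Aside (side_s f u s))).
case: (HTtri s) => [bs|h3|hc]; last 2 first.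
- apply: nbcase => /bond_card e2.
  by move: h3; rewrite /three_connected_torso /k_connected e2.
- by apply: nbcase => /bond_card e2; case: hc; rewrite e2.
  case: (bs) => x [y [nxy hBs hm]].
  set N := [set t' | f s t' & B s :&: B t' == [set x; y]].
  have hN : 2 <= #|N|.
    move: hm; rewrite /virtual_mult -/N.
    by case: (e x y) => /=; rewrite ?add1n ?add0n // => /ltnW.
  have : 0 < #|N :\ u|.
    by move: hN; rewrite (cardsD1 u N); case: (u \in N) => /=; lia.
  case/card_gt0P => s2; rewrite !inE => /and3P [ns2u fss2 hs2].
  have nb2 : ~ bond_torso e f B s2 by move=> b2; apply: (HTbb fss2).
  have [w hw nw] := exists_out (HTadh fss2) (nonbond_card nb2).
  have hs2side : s2 \in side f u s.
    have := @side_closed _ _ f_irr u s s s2 fus. move=> H. by apply: H; [apply: side_s| |].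
  exists w; split; first exact: (subsetP (B_Aside hs2side)).
  apply: contra nw; rewrite !inE => /andP [_ ->]; by rewrite hw.
Qed.

Lemma G2 (Y : {set V}) : #|Y| < 2 -> connected_in e (setT :\: Y).
Proof.
move=> hY; move: G2conn => /andP [_ /forallP /(_ Y) /implyP]; apply.
by rewrite subsetT hY.
Qed.

Lemma half_conn u s a b : f u s -> B u :&: B s = [set a; b] -> a != b ->
  forall w, w \in Aside u s -> w \notin B u :&: B s ->
  connect (induced e (Aside u s)) w b.
Proof.
move=> fus hX nab w hw nw.
have hXA : B u :&: B s \subset Aside u s by rewrite -AB_inter // subsetIl.
have hwa : w != a by apply: contraNneq nw => ->; rewrite hX !inE eqxx.
have hc : connect (induced e (setT :\: [set a])) w b.
  apply: connected_inP => //; first by apply: G2; rewrite cards1.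
    by rewrite !inE hwa.
  by rewrite !inE eq_sym nab.
set S := Aside u s :\: (B u :&: B s).
have hwS : w \in S by rewrite inE nw hw.
have hbS : b \notin S by rewrite inE hX !inE eqxx orbT.
have [c [d [hcS hdW hdS ecd hwc]]] := escape hwS hc hbS.
move: hcS; rewrite inE => /andP [ncX hcA].
have ncB : c \notin Bside u s.
  by apply: contra ncX => hcB; rewrite -AB_inter // inE hcA.
have hdA : d \in Aside u s.
  apply/negPn/negP => ndA.
  have hdB : d \in Bside u s.
    have : d \in Aside u s :|: Bside u s by rewrite AB_union inE.
    by rewrite inE (negbTE ndA).
  by move: (AB_cross hcA ncB hdB ndA); rewrite ecd.
have hdX : d \in B u :&: B s by move: hdS; rewrite inE hdA andbT negbK.
have edb : d = b.
  move: hdX hdW; rewrite hX !inE => /orP [/eqP ->|/eqP ->] //.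
  by rewrite eqxx.
apply: connect_trans (induced_mono (subsetDl _ _) hwc) (connect1 _).
by rewrite /induced /= hcA -edb hdA.
Qed.

Lemma sideP u s a b : f u s -> B u :&: B s = [set a; b] ->
  connect (induced e (Aside u s)) a b.
Proof.
move=> fus hX.
have nab : a != b.
  by apply/negP => /eqP eab; move: (HTadh fus); rewrite hX eab setUid cards1.
have [w [hw nw]] := NE fus.
have h1 := half_conn fus hX nab hw nw.
have hX' : B u :&: B s = [set b; a] by rewrite hX setUC.
have nba : b != a by rewrite eq_sym.
have h2 := half_conn fus hX' nba hw nw.
rewrite connect_induced_sym // in h2.
exact: connect_trans h2 h1.
Qed.

Lemma branch_sub t t' s : f t t' -> f t' s -> s != t -> Aside t' s \subset Aside t t'.
Proof.
move=> ftt' ft's nst; apply/subsetP => v /bigcupP [r hr hv]; apply/bigcupP; exists r => //.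
exact: (subsetP (side_sub f_sym f_irr HTtree ftt' ft's nst)).
Qed.

Lemma tsub t t' : f t t' -> B t' \subset Aside t t'.
Proof. by move=> _; apply: B_Aside; apply: side_s. Qed.

Lemma X_sub t t' : f t t' -> B t :&: B t' \subset B t'.
Proof. by move=> _; apply: subsetIr. Qed.

Lemma realize t t' x y z c (W : {set V}) a b : f t t' ->
  B t :&: B t' = [set x; y] -> c \in B t' -> (z \in B t' -> z = c) ->
  (forall s, f t' s -> s != t -> c \notin B s -> z \notin Aside t' s) ->
  W \subset B t' :\ c -> (x \notin W) || (y \notin W) ->
  connect (induced (torso e f B t') W) a b ->
  connect (induced e (Aside t t' :\ z)) a b.
Proof.
move=> ftt' hX hc hz hR hW hxyW; apply: connect_sub => a' b'.
rewrite /induced /torso /= => /and3P [ha' hb' /and4P [ha't hb't nab eab]].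
have hWz : forall v, v \in W -> v \in Aside t t' :\ z.
  move=> v hv; move: (subsetP hW v hv); rewrite !inE => /andP [nvc hvt].
  rewrite (subsetP (tsub ftt') _ hvt) andbT.
  by apply: contraNneq nvc => evz; rewrite -hz // -evz.
have [eab'|neab] := boolP (e a' b').
  by apply: connect1; rewrite /induced /= !hWz.
move: eab; rewrite (negbTE neab) /= => /card_gt0P [s]; rewrite inE => /andP [ft's /eqP hs].
have nst : s != t.
  apply/negP => /eqP est; move: hs; rewrite est setIC hX => hs.
  move: hxyW; have hx : x \in [set a'; b'] by rewrite -hs !inE eqxx.
  have hy : y \in [set a'; b'] by rewrite -hs !inE eqxx orbT.
  move: hx hy; rewrite !inE => /orP [] /eqP -> /orP [] /eqP ->;
  by rewrite ?ha' ?hb'.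
have ncs : c \notin B s.
  apply/negP => hcs; have : c \in B t' :&: B s by rewrite inE hc.
  rewrite hs !inE => /orP [] /eqP ec.
    by move: (subsetP hW _ ha'); rewrite !inE -ec eqxx.
  by move: (subsetP hW _ hb'); rewrite !inE -ec eqxx.
have hzs := hR s ft's nst ncs.
apply: induced_mono (sideP ft's hs).
apply/subsetP => v hv; rewrite !inE.
rewrite (subsetP (branch_sub ftt' ft's nst) _ hv) andbT.
by apply: contraNneq hzs => <-.
Qed.

Lemma card3 (x y c : V) : #|[set x; y; c]| <= 3.
Proof.
rewrite -setUA cardsU1 cardsU1 cards1.
by case: (x \in _); case: (y \in _).
Qed.

Lemma three_case t t' x y z : f t t' -> three_connected_torso e f B t' ->
  B t :&: B t' = [set x; y] -> z \in Aside t t' -> z \notin B t :&: B t' ->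
  connect (induced e (Aside t t' :\ z)) x y.
Proof.
move=> ftt' h3 hX hz nzX.
have nb : ~ bond_torso e f B t'.
  by move=> /bond_card e2; move: h3; rewrite /three_connected_torso /k_connected e2.
have hxt : x \in B t' by rewrite (subsetP (X_sub ftt')) // hX !inE eqxx.
have hyt : y \in B t' by rewrite (subsetP (X_sub ftt')) // hX !inE eqxx orbT.
have nxy : x != y.
  by apply/negP => /eqP exy; move: (HTadh ftt'); rewrite hX exy setUid cards1.
have [c [hc ncX hzc hR]] : exists c, [/\ c \in B t', c \notin B t :&: B t',
    (z \in B t' -> z = c) &
    (forall s, f t' s -> s != t -> c \notin B s -> z \notin Aside t' s)].
  have [hzt|nzt] := boolP (z \in B t').
    exists z; split => // s ft's nst nzs; apply/negP => hzA.
    have hzB : z \in Bside t' s.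
      by apply: (subsetP (B_Bside (side_notu f_irr ft's))).
    by have [_ hzs] := bag_sep ft's hzA hzB; rewrite hzs in nzs.
  move: (hz) => /bigcupP [r hr hzr].
  have nrt' : r != t' by apply: contraNneq nzt => <-.
  have [s0 [ft's0 hrs0]] := side_cover HTtree nrt'.
  have ns0t : s0 != t.
    apply/negP => /eqP es0; rewrite es0 in hrs0.
    have := @side_edge_disj _ _ f_sym f_irr HTtree t t' r ftt'. move=> H. exact: (H hr hrs0).
  have ft't : f t' t by rewrite f_sym.
  have nts0 : t != s0 by rewrite eq_sym.
  have hdist := HTdistinct nb ft't ft's0 nts0.
  have hdist' : B t' :&: B s0 != B t :&: B t'.
    by rewrite eq_sym [B t :&: B t']setIC.
  have : ~~ (B t' :&: B s0 \subset B t :&: B t').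
    apply: contra hdist' => hsub; rewrite eqEcard hsub HTadh //.
    by rewrite (HTadh ft's0).
  case/subsetPn => c hcP ncX.
  move: (hcP); rewrite inE => /andP [hct hcs0].
  exists c; split => //; try by move=> hzt; rewrite hzt in nzt.
  move=> s ft's nst ncs.
  have nss0 : s != s0 by apply: contraNneq ncs => ->.
  apply/negP => /bigcupP [r' hr' hzr'].
  have nrs : r \notin side f t' s.
    apply/negP => hrs; move/eqP: nss0; apply.
    exact: (side_disj f_sym f_irr HTtree ft's ft's0 hrs hrs0).
  have hzA : z \in Aside t' s by apply/bigcupP; exists r'.
  have hzB : z \in Bside t' s by apply/bigcupP; exists r.
  by have [hzt _] := bag_sep ft's hzA hzB; rewrite hzt in nzt.
have nyc : y != c by apply: contraNneq ncX => <-; rewrite hX !inE eqxx orbT.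
have nxc : x != c by apply: contraNneq ncX => <-; rewrite hX !inE eqxx.
move: h3; rewrite /three_connected_torso /k_connected => /andP [hcard hall].
have [w hw nw] : exists2 w, w \in B t' & w \notin [set x; y; c].
  case: (boolP (B t' \subset [set x; y; c])) => [sub|/subsetPn [w hw nw]].
    by move: (leq_trans (subset_leq_card sub) (card3 x y c)); rewrite leqNgt hcard.
  by exists w.
move: nw; rewrite !inE !negb_or => /andP [/andP [nwx nwy] nwc].
have torsoP : forall a, a \in B t' -> [set c; a] \subset B t' ->
   connected_in (torso e f B t') (B t' :\: [set c; a]).
  move=> a ha hsub; move: hall => /forallP /(_ [set c; a]) /implyP; apply.
  by rewrite hsub /= cards2; case: (c != a).
have hsx : [set c; x] \subset B t' by apply/subsetP => v; rewrite !inE => /orP [] /eqP ->.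
have hsy : [set c; y] \subset B t' by apply/subsetP => v; rewrite !inE => /orP [] /eqP ->.
have hWx : B t' :\: [set c; x] \subset B t' :\ c.
  by apply/subsetP => v; rewrite !inE negb_or => /andP [/andP [-> _] ->].
have hWy : B t' :\: [set c; y] \subset B t' :\ c.
  by apply/subsetP => v; rewrite !inE negb_or => /andP [/andP [-> _] ->].
have c1 : connect (induced e (Aside t t' :\ z)) w y.
  apply: (realize ftt' hX hc hzc hR hWx); first by rewrite !inE eqxx orbT.
  apply: connected_inP (torsoP x hxt hsx) _ _.
    by rewrite !inE negb_or nwc nwx hw.
  by rewrite !inE negb_or nyc eq_sym nxy hyt.
have c2 : connect (induced e (Aside t t' :\ z)) w x.
  apply: (realize ftt' hX hc hzc hR hWy); first by rewrite !inE eqxx !orbT.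
  apply: connected_inP (torsoP y hyt hsy) _ _.
    by rewrite !inE negb_or nwc nwy hw.
  by rewrite !inE negb_or nxc nxy hxt.
rewrite connect_induced_sym // in c2.
exact: connect_trans c2 c1.
Qed.

Lemma bond_case t t' x y z : f t t' -> bond_torso e f B t' ->
  B t :&: B t' = [set x; y] -> z \in Aside t t' -> z \notin B t :&: B t' ->
  connect (induced e (Aside t t' :\ z)) x y.
Proof.
move=> ftt' bt hX hz nzX.
case: (bt) => a [b [nab hBt' hm]].
have hXB : B t :&: B t' = B t'.
  apply/eqP; rewrite eqEcard subsetIr HTadh // (bond_card bt) //.
have hxy : [set x; y] = [set a; b] by rewrite -hX hXB.
have hxA : forall v, v \in [set x; y] -> v \in Aside t t' :\ z.
  move=> v hv; rewrite !inE; apply/andP; split.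
    by apply: contraNneq nzX => <-; rewrite hX.
  by apply: (subsetP (tsub ftt')); rewrite -hXB hX.
have branch : forall s, f t' s -> s != t -> B t' :&: B s == [set a; b] ->
   z \notin Aside t' s -> connect (induced e (Aside t t' :\ z)) x y.
  move=> s ft's nst /eqP hs nzs.
  rewrite -hxy in hs; apply: induced_mono (sideP ft's hs).
  apply/subsetP => v hv; rewrite !inE.
  rewrite (subsetP (branch_sub ftt' ft's nst) _ hv) andbT.
  by apply: contraNneq nzs => <-.
have [eab|neab] := boolP (e a b).
  have ha : a \in [set x; y] by rewrite hxy !inE eqxx.
  have hb : b \in [set x; y] by rewrite hxy !inE eqxx orbT.
  apply: connect1; rewrite /induced /= !hxA ?inE ?eqxx ?orbT //=.
  by case: (two_elems ha hb nab) => [[<- <-]|[<- <-]] //; rewrite e_sym.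
move: hm; rewrite (negbTE neab) add0n /virtual_mult.
set N := [set t'' | f t' t'' & B t' :&: B t'' == [set a; b]] => hN.
have : 0 < #|N :\ t| by move: hN; rewrite (cardsD1 t N); case: (t \in N) => /=; lia.
case/card_gt0P => s1; rewrite !inE => /andP [ns1t /andP [ft's1 hs1]].
have : 0 < #|N :\ t :\ s1|.
  move: hN; rewrite (cardsD1 t N) (cardsD1 s1 (N :\ t)) !inE ns1t ft's1 hs1 /=.
  by case: (t \in N) => /=; lia.
case/card_gt0P => s2; rewrite !inE => /andP [ns2s1 /andP [ns2t /andP [ft's2 hs2]]].
have [nz1|z1] := boolP (z \in Aside t' s1); last exact: (branch s1 ft's1 ns1t hs1 z1).
apply: (branch s2 ft's2 ns2t hs2); apply/negP => /bigcupP [r2 hr2 hzr2].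
move: nz1 => /bigcupP [r1 hr1 hzr1].
have nr2 : r2 \notin side f t' s1.
  apply/negP => h; move/eqP: ns2s1; apply.
  exact: (side_disj f_sym f_irr HTtree ft's2 ft's1 hr2 h).
have hzA : z \in Aside t' s1 by apply/bigcupP; exists r1.
have hzB : z \in Bside t' s1 by apply/bigcupP; exists r2.
have [hzt _] := bag_sep ft's1 hzA hzB.
by move: nzX; rewrite hXB hzt.
Qed.

Lemma hinge_edge t t' : f t t' -> ~ cycle_torso e f B t' -> hinge e (B t :&: B t').
Proof.
move=> ftt' nc.
have ft't : f t' t by rewrite f_sym.
have /cards2P [x [y [nxy hX]]] : #|B t :&: B t'| == 2 by rewrite HTadh.
set A := Aside t t'; set Bs := Bside t t'.
have hU : A :|: Bs = setT by apply: AB_union.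
have hI : A :&: Bs = B t :&: B t' by apply: AB_inter.
have hcross : forall a b, a \in A -> a \notin Bs -> b \in Bs -> b \notin A -> ~~ e a b.
  by move=> a b; apply: AB_cross.
have [w [hwA nwX]] := NE ftt'.
have nwB : w \notin Bs by apply: contra nwX => h; rewrite -hI inE hwA.
have [w' [hw'A nw'X]] := NE ft't.
have hw'B : w' \in Bs.
  move: hw'A => /bigcupP [r hr hw'r]; apply/bigcupP; exists r => //.
  by apply/negP => h; apply: (side_edge_disj f_sym f_irr HTtree ftt' h hr).
have nw'A : w' \notin A by apply: contra nw'X => h; rewrite setIC -hI inE h.
have key : forall z, z \in A -> z \notin B t :&: B t' ->
    connect (induced e (A :\ z)) x y.
  move=> z hz nz; case: (HTtri t') => [bt|h3|//].
    exact: bond_case ftt' bt hX hz nz.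
  exact: three_case ftt' h3 hX hz nz.
apply/existsP; exists A; apply/existsP; exists Bs; apply/and3P; split.
- rewrite /two_separation hU eqxx hI HTadh //=.
  apply/and3P; split.
  + by apply/set0Pn; exists w; rewrite inE nwB.
  + by apply/set0Pn; exists w'; rewrite inE nw'A.
  + apply/forall_inP => a; rewrite inE => /andP [na ha].
    apply/forall_inP => b; rewrite inE => /andP [nb hb].
    exact: hcross.
- by rewrite hI.
apply/orP; left; apply/andP; split.
  have hsub : w |: (B t :&: B t') \subset A.
    apply/subsetP => v; rewrite in_setU1 => /orP [/eqP ->//|hv].
    by rewrite -hI inE in hv; case/andP: hv.
  move: (subset_leq_card hsub); rewrite cardsU1 nwX HTadh //.
apply/forallP => Y; apply/implyP => /andP [hYA hY].
apply: (sepQ e_sym hU _ hcross hYA (G2 hY)); first by rewrite hI hX.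
move=> nxY nyY.
have [Y0|/set0Pn [z hzY]] := eqVneq Y set0.
  apply: induced_mono (key w hwA nwX).
  by apply/subsetP => v; rewrite Y0 !inE => /andP [_ ->].
have hYz : Y \subset [set z].
  apply/subsetP => v hv; rewrite inE; apply/negPn/negP => nvz.
  have : [set v; z] \subset Y by apply/subsetP => u; rewrite !inE => /orP [] /eqP ->.
  by move/subset_leq_card; rewrite cards2 nvz; apply/negP; rewrite -ltnNge.
have hzA : z \in A := subsetP hYA z hzY.
have nzX : z \notin B t :&: B t'.
  rewrite hX !inE; apply/negP => /orP [] /eqP ez; rewrite -ez in nxY nyY.
    by rewrite hzY in nxY.
  by rewrite hzY in nyY.
apply: induced_mono (key z hzA nzX).
apply/subsetP => v; rewrite !inE => /andP [nvz ->]; rewrite andbT.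
by apply: contra nvz => /(subsetP hYz); rewrite inE.
Qed.

Lemma hinge_adj t t' : f t t' -> hinge e (B t :&: B t').
Proof.
move=> ftt'; case: (classic (cycle_torso e f B t')) => hc; last exact: hinge_edge.
have nct : ~ cycle_torso e f B t by move=> ct; apply: (HTcc ftt').
rewrite setIC; apply: hinge_edge => //; by rewrite f_sym.
Qed.

Definition adh t0 p := pairmap (fun a b => B a :&: B b) t0 p.

Lemma mem_adh t0 p X : X \in adh t0 p ->
  exists l1 l2 a b, t0 :: p = l1 ++ a :: b :: l2 /\ X = B a :&: B b.
Proof.
elim: p t0 => [//|y p IH] t0 /=; rewrite inE => /orP [/eqP ->|hX].
  by exists [::], p, t0, y.
have [l1 [l2 [a [b [h1 h2]]]]] := IH y hX.
by exists (t0 :: l1), l2, a, b; rewrite h1.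
Qed.

Lemma adh_edge t0 p X : path f t0 p -> X \in adh t0 p ->
  exists a b, [/\ f a b, a \in t0 :: p & X = B a :&: B b].
Proof.
move=> hp /mem_adh [l1 [l2 [a [b [h1 h2]]]]]; exists a, b; split => //.
  case: l1 h1 => [|c l1] /= [e0 ep].
    by rewrite -e0; move: hp; rewrite ep /= => /andP [].
  by move: hp; rewrite ep cat_path /= => /andP [_ /and3P [_ ->]].
by rewrite h1 mem_cat inE eqxx orbT.
Qed.

Lemma prefix_on t0 p p1 p2 w : path f t0 p -> uniq (t0 :: p) -> p = p1 ++ p2 ->
  w \in t0 :: p1 -> on_tpath f t0 w (last t0 p1).
Proof.
move=> hp hu ep hw; exists p1; split => //.
  by move: hp; rewrite ep cat_path => /andP [].
by move: hu; rewrite ep -cat_cons cat_uniq => /andP [].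
Qed.

Lemma adh_good t0 p : path f t0 p -> uniq (t0 :: p) -> good (adh t0 p).
Proof.
elim: p t0 => [//|t1 p IH] t0 /= /andP [ft01 hp] /andP [nt0 hu].
rewrite IH // andbT.
case: p hp hu nt0 IH => [//|t2 q] hp hu nt0 _ /=.
apply/negP => /mem_adh [l1 [l2 [a [b [h1 hX]]]]].
case: q hp hu nt0 h1 => [|t3 q'] hp hu nt0 h1.
  by case: l1 h1 => [|c [|d l1]] //= [].
have hmem : (t2 \in l1 ++ [:: a; b]) && (t3 \in l1 ++ [:: a; b]).
  case: l1 h1 => [|c l1] /= [e2 e3].
    by move=> _; rewrite e2 e3 !inE !eqxx !orbT.
  rewrite e2 inE eqxx /=.
  by case: l1 e3 => [|d l1] /= [e3 _]; rewrite e3 !inE ?eqxx ?orbT.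
move/andP: hmem => [h2m h3m].
have ep : t1 :: t2 :: t3 :: q' = (t1 :: l1 ++ [:: a; b]) ++ l2.
  by rewrite h1 /= -catA.
have hp0 : path f t0 (t1 :: t2 :: t3 :: q') by rewrite /= ft01.
have hu0 : uniq (t0 :: t1 :: t2 :: t3 :: q') by rewrite /= nt0.
have hlast : last t0 (t1 :: l1 ++ [:: a; b]) = b by rewrite /= last_cat.
have onP : forall w, w \in t0 :: t1 :: l1 ++ [:: a; b] -> B t0 :&: B b \subset B w.
  by move=> w hw; rewrite -hlast; apply: HTpath; apply: prefix_on hp0 hu0 ep hw.
set X0 := B t0 :&: B t1.
have hXs : X0 \subset B t0 :&: B b.
  apply/subsetP => v hv; rewrite inE.
  move: (hv); rewrite {1}/X0 inE => /andP [-> _].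
  by move: hv; rewrite /X0 hX inE => /andP [_ ->].
have sub_w : forall w, w \in t0 :: t1 :: l1 ++ [:: a; b] -> X0 \subset B w.
  by move=> w hw; apply: subset_trans hXs (onP w hw).
have m1 : t1 \in t0 :: t1 :: l1 ++ [:: a; b] by rewrite !inE eqxx orbT.
have m2 : t2 \in t0 :: t1 :: l1 ++ [:: a; b] by rewrite !inE h2m !orbT.
have m3 : t3 \in t0 :: t1 :: l1 ++ [:: a; b] by rewrite !inE h3m !orbT.
move: hp => /= /and3P [f12 f23 _].
have eq12 : B t1 :&: B t2 = X0.
  apply/esym/eqP; rewrite eqEcard HTadh // /X0 HTadh // leqnn andbT.
  by rewrite subsetI (sub_w _ m1) (sub_w _ m2).
have eq23 : B t2 :&: B t3 = X0.
  apply/esym/eqP; rewrite eqEcard HTadh // /X0 HTadh // leqnn andbT.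
  by rewrite subsetI (sub_w _ m2) (sub_w _ m3).
move: hu0; rewrite /= !inE !negb_or => /andP [/and3P [n01 n02 /andP [n03 _]] /andP [/andP [n12 /andP [n13 _]] _]].
case: (classic (bond_torso e f B t1)) => bt1.
  have nbt2 : ~ bond_torso e f B t2 by move=> bt2; apply: (HTbb f12).
  have := HTdistinct nbt2 (_ : f t2 t1) f23 n13.
  by rewrite f_sym f12 setIC eq12 eq23 eqxx => /(_ erefl).
have := HTdistinct bt1 (_ : f t1 t0) f12 n02.
by rewrite f_sym ft01 setIC -/X0 eq12 eqxx => /(_ erefl).
Qed.

Lemma main_sec (n : nat) : diameter_gt f (4 * n * graph_spread e) ->
  has_parallel_hinges e f B n.
Proof.
case=> x [y Hd].
case/connectP: (f_conn HTtree x y) => p0 hp0 el; move: el.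
case: (shortenP hp0) => p hp hu _ hl; symmetry in hl.
have hK := Hd p hp hl.
set A := adh x p.
set F := [set X | X \in A].
have hFA : forall X, X \in F -> X \in A by move=> X; rewrite inE.
have hedge : forall X, X \in F -> exists a b, [/\ f a b, a \in x :: p & X = B a :&: B b].
  by move=> X /hFA; apply: adh_edge.
have hcF : #|F| = size (undup A).
  rewrite cardsE -(card_uniqP (undup_uniq A)).
  by apply: eq_card => X; rewrite mem_undup.
have hsz : size p <= #|F|.*2.
  by rewrite hcF -(size_pairmap (fun a b => B a :&: B b) x p); apply: good_undup; apply: adh_good.
have hd : forall v, #|[set Y in F | v \in Y]| <= graph_spread e.
  move=> v; apply: (@leq_trans (spread e v)); last first.
    rewrite /graph_spread. exact: leq_bigmax.
  apply: subset_leq_card; apply/subsetP => Y; rewrite !inE => /andP [/(adh_edge hp) [a [b [fab _ ->]]] hv].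
  by rewrite hv hinge_adj.
have h2 : forall X, X \in F -> #|X| = 2.
  by move=> X /hedge [a [b [fab _ ->]]]; apply: HTadh.
have [s [hsF hsp hsc]] := greedy hd h2.
exists s; split => //.
- move: hK hsz hsc; move: (graph_spread e) => d; rewrite -!muln2 => h1 h2' h3.
  have h4 : 4 * n * d < 4 * d * size s.
    apply: (leq_trans h1); apply: (leq_trans h2').
    rewrite (mulnC 4) -mulnA mulnC; move: h3; move: #|F| (size s) => a ss; nia.
  move: h4; clear; move: (size s) => ss; nia.
- apply/allP => X /hsF /hedge [a [b [fab _ ->]]]; exact: hinge_adj.
exists x, p; split => // X /hsF /hedge [a [b [fab ha ->]]].
by exists a => //; apply: subsetIl.
Qed.

End Decomp.

Unset Implicit Arguments.

Theorem mainTheorem15 (V : finType) (e : rel V)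
  (e_sym : symmetric e) (e_irr : irreflexive e)
  (G2conn : two_connected e)
  (I : finType) (f : rel I) (f_sym : symmetric f) (f_irr : irreflexive f)
  (B : I -> {set V}) (HT : tutte_decomposition e f B)
  (n : nat) (Hn : 2 <= n) :
  diameter_gt f (4 * n * graph_spread e) ->
  has_parallel_hinges e f B n.
Proof. exact: main_sec. Qed.
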